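(* Consider a degree-corrected stochastic block model with $K$ communities, membership matrix $\Theta\in\mathbb M_{n,K}$ (every community nonempty), symmetric $B\in[0,1]^{K\times K}$ with $\mathrm{rank}(B)=K'\le K$, and node propensities $\vartheta\in\mathbb R^n_{+}$ with $\max_{i\in G_k}\vartheta_i=1$ for each $k$. Let $P=\mathrm{diag}(\vartheta)\Theta B\Theta^\intercal\mathrm{diag}(\vartheta)=U\Sigma U^\intercal$ be its eigenvalue decomposition with $U\in\mathbb R^{n\times K'}$ having orthonormal columns. Let $\phi_k\in\mathbb R^n$ agree with $\vartheta$ on $G_k$ and be zero elsewhere, $\Omega=\mathrm{diag}(\|\phi_1\|_2,\dots,\|\phi_K\|_2)$, $\bar B=\Omega B\Omega$, and let $\bar B=HDH^\intercal$ be its eigenvalue decomposition with $H\in\mathbb R^{K\times K'}$. Then: (a) If $K'=K$, then $\cos(U_{i\ast},U_{j\ast})=1$ whenever $\Theta_{i\ast}=\Theta_{j\ast}$ and $\cos(U_{i\ast},U_{j\ast})=0$ whenever $\Theta_{i\ast}\ne\Theta_{j\ast}$. (b) If $K'<K$, then $\cos(U_{i\ast},U_{j\ast})=1$ whenever $\Theta_{i\ast}=\Theta_{j\ast}$; and if the rows of $H$ are not pairwise proportional in the sense that there is a deterministic sequence $\xi'_n<1$ with $\max_{k\ne l}\cos(H_{k\ast},H_{l\ast})\le\xi'_n$, then for $\Theta_{i\ast}\ne\Theta_{j\ast}$, $\cos(U_{i\ast},U_{j\ast})=\cos(H_{g_i\ast},H_{g_j\ast})\le\xi'_n<1$.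
   Context: $\mathbb M_{n,K}$: $n\times K$ 0/1 matrices with exactly one $1$ per row; node $i$ belongs to community $g_i$ iff $\Theta_{ig_i}=1$; $G_k=\{i:g_i=k\}$. $M_{i\ast}$ denotes the $i$-th row. For vectors $a,b$, $\cos(a,b)=a^\intercal b/(\|a\|_2\|b\|_2)$. *)

(* Defs.v *)
From HB Require Import structures.
From mathcomp Require Import all_boot all_order all_algebra.
Set Implicit Arguments. Unset Strict Implicit. Unset Printing Implicit Defensive.
Import Order.TTheory GRing.Theory Num.Theory.
Local Open Scope ring_scope.

Definition vdot (R : rcfType) (m : nat) (a b : 'rV[R]_m) : R :=
  \sum_(j < m) a 0 j * b 0 j.
Definition vnorm (R : rcfType) (m : nat) (a : 'rV[R]_m) : R :=
  Num.sqrt (vdot a a).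
(* cos(a,b) = a^T b / (||a|| ||b||)  (division by 0 yields 0 in MathComp) *)
Definition vcos (R : rcfType) (m : nat) (a b : 'rV[R]_m) : R :=
  vdot a b / (vnorm a * vnorm b).

Definition memb_mx (R : rcfType) (n K : nat) (g : 'I_n -> 'I_K) : 'M[R]_(n, K) :=
  \matrix_(i < n, k < K) (g i == k)%:R.

Definition phi_vec (R : rcfType) (n K : nat) (g : 'I_n -> 'I_K) (theta : 'rV[R]_n)
  (k : 'I_K) : 'rV[R]_n :=
  \row_(i < n) (if g i == k then theta 0 i else 0).

Definition Omega_mx (R : rcfType) (n K : nat) (g : 'I_n -> 'I_K) (theta : 'rV[R]_n)
  : 'M[R]_K :=
  diag_mx (\row_(k < K) vnorm (phi_vec g theta k)).

Definition dcsbm_P (R : rcfType) (n K : nat) (g : 'I_n -> 'I_K) (theta : 'rV[R]_n)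
  (B : 'M[R]_K) : 'M[R]_n :=
  diag_mx theta *m memb_mx R g *m B *m (memb_mx R g)^T *m diag_mx theta.

Definition Bbar_mx (R : rcfType) (n K : nat) (g : 'I_n -> 'I_K) (theta : 'rV[R]_n)
  (B : 'M[R]_K) : 'M[R]_K :=
  Omega_mx g theta *m B *m Omega_mx g theta.

(* Main.v *)
Require Import Defs.
From HB Require Import structures.
From mathcomp Require Import all_boot all_order all_algebra.
From mathcomp Require Import lra.
Import Order.TTheory GRing.Theory Num.Theory.
Local Open Scope ring_scope.

Section Aux.
Variable R : rcfType.

Lemma vdot_mx m (a b : 'rV[R]_m) : vdot a b = (a *m b^T) 0 0.
Proof. by rewrite /vdot !mxE; apply: eq_bigr => j _; rewrite mxE. Qed.

Lemma vdot_orth m p (a b : 'rV[R]_m) (M : 'M[R]_(m, p)) :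
  M *m M^T = 1%:M -> vdot (a *m M) (b *m M) = vdot a b.
Proof.
move=> HM; rewrite !vdot_mx trmx_mul !mulmxA -(mulmxA a) HM mulmx1 //.
Qed.

Lemma vdotZl m c (a b : 'rV[R]_m) : vdot (c *: a) b = c * vdot a b.
Proof. by rewrite /vdot mulr_sumr; apply: eq_bigr => j _; rewrite mxE mulrA. Qed.

Lemma vdotC m (a b : 'rV[R]_m) : vdot a b = vdot b a.
Proof. by apply: eq_bigr => j _; rewrite mulrC. Qed.

Lemma vdotZr m c (a b : 'rV[R]_m) : vdot a (c *: b) = c * vdot a b.
Proof. by rewrite vdotC vdotZl vdotC. Qed.

Lemma vdot_ge0 m (a : 'rV[R]_m) : 0 <= vdot a a.
Proof. by apply: sumr_ge0 => j _; rewrite -expr2 sqr_ge0. Qed.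

Lemma vnormZ m c (a : 'rV[R]_m) : vnorm (c *: a) = `|c| * vnorm a.
Proof.
rewrite /vnorm vdotZl vdotZr mulrA -expr2 sqrtrM ?sqr_ge0 // sqrtr_sqr //.
Qed.

Lemma vcosZ m c e (a b : 'rV[R]_m) : 0 < c -> 0 < e ->
  vcos (c *: a) (e *: b) = vcos a b.
Proof.
move=> hc he; rewrite /vcos vdotZl vdotZr !vnormZ !gtr0_norm //.
by rewrite mulrA mulrACA invfM mulrACA mulfV ?mul1r // mulf_neq0 ?gt_eqF.
Qed.

Lemma vcos_orth m p (a b : 'rV[R]_m) (M : 'M[R]_(m, p)) :
  M *m M^T = 1%:M -> vcos (a *m M) (b *m M) = vcos a b.
Proof. by move=> HM; rewrite /vcos /vnorm !vdot_orth. Qed.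

Lemma vcos_self m (a : 'rV[R]_m) : a != 0 -> vcos a a = 1.
Proof.
move=> ha; rewrite /vcos /vnorm -expr2 sqr_sqrtr ?vdot_ge0 // mulfV //.
apply/eqP => h; move/eqP: ha; apply; apply/rowP => j; rewrite mxE.
have /psumr_eq0P H0 := h.
have /eqP := H0 (fun i _ => ltac:(by rewrite -expr2 sqr_ge0)) j isT.
by rewrite mulf_eq0 orbb => /eqP.
Qed.

End Aux.

Section Aux2.
Variable R : rcfType.

Lemma diag_inv p (s : 'rV[R]_p) : (forall k, s 0 k != 0) ->
  diag_mx s *m diag_mx (\row_k (s 0 k)^-1) = 1%:M.
Proof.
move=> hs; apply/matrixP => i j; rewrite mul_diag_mx !mxE.
by case: eqP => [->|_]; rewrite ?mulr1n ?mulr0n ?mulr0 // ?mxE mulfV.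
Qed.

Arguments diag_inv [p s].

Lemma align_aux n p (U W : 'M[R]_(n, p)) (s t : 'rV[R]_p) :
  U^T *m U = 1%:M -> (forall k, s 0 k != 0) ->
  U *m diag_mx s *m U^T = W *m diag_mx t *m W^T ->
  U = W *m (diag_mx t *m W^T *m U *m diag_mx (\row_k (s 0 k)^-1)).
Proof.
move=> hU hs hE.
rewrite -{1}(mulmx1 U) -(diag_inv hs) mulmxA -{1}(mulmx1 (U *m diag_mx s)) -hU.
by rewrite !mulmxA hE ?mulmxA.
Qed.

Arguments align_aux [n p U W s t].

Lemma align n p (U W : 'M[R]_(n, p)) (s t : 'rV[R]_p) :
  U^T *m U = 1%:M -> W^T *m W = 1%:M ->
  (forall k, s 0 k != 0) -> (forall k, t 0 k != 0) ->
  U *m diag_mx s *m U^T = W *m diag_mx t *m W^T ->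
  U = W *m (W^T *m U) /\ (W^T *m U) *m (W^T *m U)^T = 1%:M.
Proof.
move=> hU hW hs ht hE.
have e1 : U = W *m (W^T *m U).
  have h := align_aux hU hs hE.
  by rewrite {2}h (mulmxA W^T) hW mul1mx -h.
have e2 : W = U *m (U^T *m W).
  have h := align_aux hW ht (esym hE).
  by rewrite {2}h (mulmxA U^T) hU mul1mx -h.
split => //; apply: mulmx1C.
have : U^T *m U = U^T *m U *m ((U^T *m W) *m (W^T *m U)).
  by rewrite mulmxA -(mulmxA U^T U) -e2 -mulmxA -e1.
by rewrite hU mul1mx trmx_mul trmxK => <-.
Qed.

End Aux2.

Section Model.
Variables (R : rcfType) (n K : nat) (g : 'I_n -> 'I_K) (theta : 'rV[R]_n).
Hypothesis Hne : forall k : 'I_K, exists i : 'I_n, g i = k.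
Hypothesis Hpos : forall i : 'I_n, 0 < theta 0 i.

Definition om (k : 'I_K) := vnorm (phi_vec g theta k).

Lemma vdot_phi_gt0 k : 0 < vdot (phi_vec g theta k) (phi_vec g theta k).
Proof.
have [i0 hi0] := Hne k.
rewrite /vdot (bigD1 i0) //= !mxE hi0 eqxx.
have h1 : 0 < theta 0 i0 * theta 0 i0 by rewrite mulr_gt0.
have h2 : 0 <= \sum_(j < n | j != i0) phi_vec g theta k 0 j * phi_vec g theta k 0 j.
  by apply: sumr_ge0 => j _; rewrite -expr2 sqr_ge0.
lra.
Qed.

Lemma om_gt0 k : 0 < om k.
Proof. by rewrite /om /vnorm sqrtr_gt0 vdot_phi_gt0. Qed.

Definition Psi : 'M[R]_(n, K) :=
  \matrix_(i, k) ((g i == k)%:R * theta 0 i / om k).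

Lemma PsiOm : Psi *m Omega_mx g theta = diag_mx theta *m memb_mx R g.
Proof.
rewrite /Omega_mx mul_mx_diag mul_diag_mx; apply/matrixP => i k; rewrite !mxE.
by rewrite divfK ?(gt_eqF (om_gt0 k)) // mulrC.
Qed.

Lemma PsiTPsi : Psi^T *m Psi = 1%:M.
Proof.
apply/matrixP => k l; rewrite !mxE.
case: (eqVneq k l) => [<-|hkl].
  rewrite mulr1n.
  transitivity (vdot (phi_vec g theta k) (phi_vec g theta k) / om k ^+ 2).
    rewrite /vdot mulr_suml; apply: eq_bigr => i _; rewrite !mxE.
    case: eqP => _; rewrite ?mul0r ?mulr0 ?mul1r //.
    by rewrite expr2 invfM mulrACA.
  by rewrite /om /vnorm sqr_sqrtr ?vdot_ge0 // mulfV // gt_eqF // vdot_phi_gt0.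
rewrite mulr0n big1 // => i _; rewrite !mxE.
case: (eqVneq (g i) k) => [e|ne]; last by rewrite mul0r mul0r mul0r.
by rewrite e (negbTE hkl) !mul0r mulr0.
Qed.

Lemma P_Psi B : dcsbm_P g theta B = Psi *m Bbar_mx g theta B *m Psi^T.
Proof.
have -> : dcsbm_P g theta B =
   (Psi *m Omega_mx g theta) *m B *m (Psi *m Omega_mx g theta)^T.
  by rewrite PsiOm trmx_mul tr_diag_mx /dcsbm_P !mulmxA.
by rewrite trmx_mul /Bbar_mx /Omega_mx tr_diag_mx !mulmxA.
Qed.

Lemma row_PsiH p (H : 'M[R]_(K, p)) i :
  row i (Psi *m H) = (theta 0 i / om (g i)) *: row (g i) H.
Proof.
rewrite row_mul.
have -> : row i Psi = (theta 0 i / om (g i)) *: delta_mx 0 (g i).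
  apply/rowP => k; rewrite !mxE eqxx /=.
  case: eqP => [<-|ne]; first by rewrite eqxx mulr1 mul1r.
  rewrite (_ : (k == g i) = false) ?mulr0 ?mul0r //.
  by apply/eqP => e; apply: ne; rewrite e.
by rewrite -scalemxAl -rowE.
Qed.

End Model.
Arguments om {R n K} g theta k.
Arguments Psi {R n K} g theta.
Arguments om_gt0 {R n K g theta} Hne Hpos k.
Arguments PsiTPsi {R n K g theta} Hne Hpos.
Arguments P_Psi {R n K g theta} Hne Hpos B.
Arguments row_PsiH {R n K g theta p} H i.
Arguments align {R n p U W s t}.

Lemma memb_row (R : rcfType) n K (g : 'I_n -> 'I_K) i j :
  (row i (memb_mx R g) == row j (memb_mx R g)) = (g i == g j).
Proof.
apply/eqP/eqP => [e|e].
  have := congr1 (fun v : 'rV[R]_K => v 0 (g i)) e; rewrite !mxE eqxx.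
  by case: eqP => // _ /eqP; rewrite oner_eq0.
by apply/rowP => k; rewrite !mxE e.
Qed.

Theorem lemma3 (R : rcfType) (n K K' : nat)
  (g : 'I_n -> 'I_K) (theta : 'rV[R]_n) (B : 'M[R]_K)
  (U : 'M[R]_(n, K')) (sigma : 'rV[R]_K')
  (H : 'M[R]_(K, K')) (d : 'rV[R]_K')
  (* every community nonempty *)
  (Hne : forall k : 'I_K, exists i : 'I_n, g i = k)
  (* B symmetric with entries in [0,1], rank K' <= K *)
  (HBsym : B^T = B)
  (HB01 : forall k l : 'I_K, 0 <= B k l <= 1)
  (HBrank : \rank B = K')
  (HKK : (K' <= K)%N)
  (* no row of B vanishes (needed for the cosines to be defined; see NOTES) *)
  (HBrow : forall k : 'I_K, row k B != 0)
  (* positive propensities, with max_{i in G_k} theta_i = 1 *)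
  (Hpos : forall i : 'I_n, 0 < theta 0 i)
  (Hmax1 : forall k : 'I_K, (forall i : 'I_n, g i = k -> theta 0 i <= 1) /\
                           (exists i : 'I_n, g i = k /\ theta 0 i = 1))
  (* eigendecomposition P = U Sigma U^T, U with orthonormal columns *)
  (HUorth : U^T *m U = 1%:M)
  (Hsigma : forall k : 'I_K', sigma 0 k != 0)
  (HP : dcsbm_P g theta B = U *m diag_mx sigma *m U^T)
  (* eigendecomposition Bbar = H D H^T *)
  (HHorth : H^T *m H = 1%:M)
  (Hd : forall k : 'I_K', d 0 k != 0)
  (HBbar : Bbar_mx g theta B = H *m diag_mx d *m H^T) :
  (* (a) *)
  (K' = K ->
     forall i j : 'I_n,
       (row i (memb_mx R g) = row j (memb_mx R g) -> vcos (row i U) (row j U) = 1) /\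
       (row i (memb_mx R g) != row j (memb_mx R g) -> vcos (row i U) (row j U) = 0)) /\
  (* (b) *)
  ((K' < K)%N ->
     (forall i j : 'I_n,
        row i (memb_mx R g) = row j (memb_mx R g) -> vcos (row i U) (row j U) = 1) /\
     (forall xi : R, xi < 1 ->
        (forall k l : 'I_K, k != l -> vcos (row k H) (row l H) <= xi) ->
        forall i j : 'I_n, row i (memb_mx R g) != row j (memb_mx R g) ->
          vcos (row i U) (row j U) = vcos (row (g i) H) (row (g j) H) /\
          vcos (row (g i) H) (row (g j) H) <= xi)).
Proof.
pose W := Psi g theta *m H.
have hW : W^T *m W = 1%:M.
  by rewrite /W trmx_mul mulmxA -(mulmxA H^T) (PsiTPsi Hne Hpos) mulmx1.
have hE : U *m diag_mx sigma *m U^T = W *m diag_mx d *m W^T.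
  by rewrite -HP (P_Psi Hne Hpos) HBbar /W trmx_mul !mulmxA.
have [eU hM] := align HUorth hW Hsigma Hd hE.
have main : forall i j, vcos (row i U) (row j U) = vcos (row (g i) H) (row (g j) H).
  move=> i j; rewrite eU; set M := W^T *m U; rewrite !(row_mul _ W M) /W.
rewrite !row_PsiH -!scalemxAl vcosZ ?vcos_orth //.
    by rewrite divr_gt0 // (om_gt0 Hne Hpos).
  by rewrite divr_gt0 // (om_gt0 Hne Hpos).
have Hrow : forall k, row k H != 0.
  move=> k; apply/eqP => hk.
  case: (pickP (fun l => B k l != 0)) => [l hl | h0]; last first.
    move/eqP: (HBrow k); apply; apply/rowP => l; rewrite !mxE.
    by apply/eqP; move: (h0 l) => /negbFE.
  have : row k (Bbar_mx g theta B) = 0 by rewrite HBbar !row_mul hk !mul0mx.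
  move/(congr1 (fun v : 'rV[R]_K => v 0 l)).
  rewrite /Bbar_mx /Omega_mx mul_mx_diag mul_diag_mx !mxE => /eqP.
  by rewrite !mulf_eq0 (negbTE hl) (gt_eqF (om_gt0 Hne Hpos k)) (gt_eqF (om_gt0 Hne Hpos l)).
have same : forall i j, row i (memb_mx R g) = row j (memb_mx R g) ->
    vcos (row i U) (row j U) = 1.
  move=> i j /eqP; rewrite memb_row => /eqP e.
  by rewrite main e vcos_self.
split.
  move=> eK; clear HBrank; subst K'; move=> i j; split; first exact: same.
  rewrite memb_row main => ne.
  have hHH : H *m H^T = 1%:M := mulmx1C HHorth.
  rewrite /vcos.
  have -> : vdot (row (g i) H) (row (g j) H) = (H *m H^T) (g i) (g j).
    by rewrite /vdot !mxE; apply: eq_bigr => m _; rewrite !mxE.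
  by rewrite hHH mxE (negbTE ne) mul0r.
move=> _; split; first exact: same.
move=> xi _ Hxi i j; rewrite memb_row => ne; split; first exact: main.
exact: Hxi.
Qed.
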